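(* Let $\mathcal X,\mathcal Y$ be finite sets, let $P_{XY}$ be a probability distribution on $\mathcal X\times\mathcal Y$, let $n\ge 1$, and let $\mathcal A$ be a finite set of possible training sets. Let $\mathbb P(y_{1:n}\mid a,x_{1:n})$ be an inductive learning protocol (as defined in the context). Then there exist a set $F$ of functions $f:\mathcal X\to\mathcal Y$ and a stochastic map $T(f\mid a)$ (a probability distribution on $F$ for each $a\in\mathcal A$) such that, with $Q(y\mid x,f)=\delta_{y,f(x)}$, the protocol $$\tilde{\mathbb P}(y_{1:n}\mid a,x_{1:n})=\sum_{f\in F}\Big[\prod_{i=1}^n Q(y_i\mid x_i,f)\Big]T(f\mid a)$$ satisfies $\mathbf E[\mathbb P\mid a]=\mathbf E[\tilde{\mathbb P}\mid a]$ for every $a\in\mathcal A$.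
   Context: Notation: $x_{1:n}=(x_1,\dots,x_n)$, and similarly for $y_{1:n}$, $y'_{1:n}$. A learning protocol is a stochastic map $\mathbb P(y_{1:n}\mid a,x_{1:n})$, i.e. for each training set $a$ and test instances $x_{1:n}\in\mathcal X^n$, a probability distribution over label tuples $y_{1:n}\in\mathcal Y^n$. Its marginal maps are $\mathbb P_i(y_i\mid a,x_{1:n})=\sum_{y_{1:i-1},y_{i+1:n}}\mathbb P(y_{1:n}\mid a,x_{1:n})$. The protocol is called inductive (non-signalling) if for every $i$, $\mathbb P_i(y_i\mid a,x_{1:n})$ does not depend on $x_j$ for $j\neq i$, i.e. $\mathbb P_i(y_i\mid a,x_{1:i-1},x_i,x_{i+1:n})=\mathbb P_i(y_i\mid a,x'_{1:i-1},x_i,x'_{i+1:n})$ for all $x'_{1:i-1},x'_{i+1:n}$. With $s_{j,k}=1-\delta_{j,k}$, the conditional expected risk is $$\mathbf E[\mathbb P\mid a]=\sum_{x_{1:n},y_{1:n},y'_{1:n}}\frac1n\sum_{i=1}^n s_{y_i,y'_i}\,\mathbb P(y_{1:n}\mid a,x_{1:n})\prod_{j=1}^n P_{XY}(x_j,y'_j).$$ *)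

(* Defs.v *)
(* all quantities are finite sums over finite types, so we
   work over an arbitrary real field R (covers the reals). *)
From HB Require Import structures.
From mathcomp Require Import all_boot all_order all_algebra.
Set Implicit Arguments. Unset Strict Implicit. Unset Printing Implicit Defensive.
Import Order.TTheory GRing.Theory Num.Theory.
Local Open Scope ring_scope.

Definition is_joint_dist (R : realFieldType) (X Y : finType) (PXY : X -> Y -> R) :=
  (forall x y, 0 <= PXY x y) /\ \sum_(x : X) \sum_(y : Y) PXY x y = 1.

Definition is_protocol (R : realFieldType) (X Y A : finType) (n : nat)
  (P : A -> {ffun 'I_n -> X} -> {ffun 'I_n -> Y} -> R) :=
  (forall a x y, 0 <= P a x y) /\
  (forall a x, \sum_(y : {ffun 'I_n -> Y}) P a x y = 1).

Definition marginal (R : realFieldType) (X Y A : finType) (n : nat)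
  (P : A -> {ffun 'I_n -> X} -> {ffun 'I_n -> Y} -> R)
  (i : 'I_n) (yi : Y) (a : A) (x : {ffun 'I_n -> X}) : R :=
  \sum_(y : {ffun 'I_n -> Y} | y i == yi) P a x y.

Definition inductive (R : realFieldType) (X Y A : finType) (n : nat)
  (P : A -> {ffun 'I_n -> X} -> {ffun 'I_n -> Y} -> R) :=
  forall (i : 'I_n) (yi : Y) (a : A) (x x' : {ffun 'I_n -> X}),
    x i = x' i -> marginal P i yi a x = marginal P i yi a x'.

Definition sdist (R : realFieldType) (Y : eqType) (y y' : Y) : R :=
  1 - (y == y')%:R.

Definition exp_risk (R : realFieldType) (X Y A : finType) (n : nat)
  (PXY : X -> Y -> R)
  (P : A -> {ffun 'I_n -> X} -> {ffun 'I_n -> Y} -> R) (a : A) : R :=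
  \sum_(x : {ffun 'I_n -> X}) \sum_(y : {ffun 'I_n -> Y})
    \sum_(y' : {ffun 'I_n -> Y})
      (n%:R)^-1 * (\sum_(i < n) sdist R (y i) (y' i)) * P a x y *
      \prod_(j < n) PXY (x j) (y' j).

Definition Qdet (R : realFieldType) (X Y : finType) (y : Y) (x : X)
  (f : {ffun X -> Y}) : R := (y == f x)%:R.

Definition det_protocol (R : realFieldType) (X Y A : finType) (n : nat)
  (F : {set {ffun X -> Y}}) (T : A -> {ffun X -> Y} -> R)
  (a : A) (x : {ffun 'I_n -> X}) (y : {ffun 'I_n -> Y}) : R :=
  \sum_(f in F) (\prod_(i < n) Qdet R (y i) (x i) f) * T a f.

(* Main.v *)
Require Import Defs.
From HB Require Import structures.
From mathcomp Require Import all_boot all_order all_algebra.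
Import Order.TTheory GRing.Theory Num.Theory.
Local Open Scope ring_scope.

Lemma sum_ffun_single (R : comRingType) (I J : finType) (i : I) (k : J -> R) (w : I -> J -> R) :
  \sum_(f : {ffun I -> J}) k (f i) * \prod_(j | j != i) w j (f j)
  = (\sum_y k y) * \prod_(j | j != i) \sum_y w j y.
Proof.
pose F := (fun j y => if j == i then k y else w j y).
have H : \prod_j \sum_y F j y = \sum_(f : {ffun I -> J}) \prod_j F j (f j) := bigA_distr_bigA _.
rewrite (bigD1 i) //= /F eqxx in H.
rewrite (eq_bigr (fun j => \sum_y w j y)) in H; last by move=> j /negbTE ->.
rewrite H.
apply: eq_bigr => f _; rewrite [RHS](bigD1 i) //= /F eqxx; congr (_ * _).
by apply: eq_bigr => j /negbTE ->.
Qed.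

Lemma risk_formula (R : realFieldType) (X Y A : finType) (n : nat)
  (PXY : X -> Y -> R)
  (P : A -> {ffun 'I_n -> X} -> {ffun 'I_n -> Y} -> R) (a : A)
  (g : 'I_n -> Y -> X -> R) :
  \sum_(x : X) \sum_(y : Y) PXY x y = 1 ->
  (forall i yi x, marginal P i yi a x = g i yi (x i)) ->
  exp_risk PXY P a = n%:R^-1 * \sum_(i < n) \sum_(x0 : X) \sum_(yi : Y) \sum_(y0 : Y)
      sdist R yi y0 * g i yi x0 * PXY x0 y0.
Proof.
move=> H1 Hg; rewrite /exp_risk.
transitivity (n%:R^-1 * \sum_(i < n) \sum_(x : {ffun 'I_n -> X}) \sum_(y' : {ffun 'I_n -> Y})
   (\sum_(y : {ffun 'I_n -> Y}) sdist R (y i) (y' i) * P a x y) * \prod_(j < n) PXY (x j) (y' j)).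
  under eq_bigr => x _ do under eq_bigr => y _ do under eq_bigr => y' _ do rewrite mulr_sumr !mulr_suml.
  under eq_bigr => x _ do under eq_bigr => y _ do rewrite exchange_big.
  under eq_bigr => x _ do rewrite exchange_big.
  rewrite exchange_big [RHS]mulr_sumr; apply: eq_bigr => i _.
  rewrite mulr_sumr; apply: eq_bigr => x _.
  rewrite mulr_sumr exchange_big; apply: eq_bigr => y _.
  rewrite mulr_suml [RHS]mulr_sumr; apply: eq_bigr => y0 _.
  by rewrite !mulrA.
congr (_ * _); apply: eq_bigr => i _.
pose h x0 y0 := \sum_(yi : Y) sdist R yi y0 * g i yi x0.
have E1 x c : \sum_(y : {ffun 'I_n -> Y}) sdist R (y i) c * P a x y = h (x i) c.
  rewrite (partition_big (fun y : {ffun 'I_n -> Y} => y i) xpredT) //=.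
  apply: eq_bigr => yi _; rewrite -Hg /marginal mulr_sumr.
  by apply: eq_big => y // /eqP ->.
under eq_bigr => x _ do under eq_bigr => y' _ do rewrite E1.
have E2 (x : {ffun 'I_n -> X}) : \sum_(y' : {ffun 'I_n -> Y}) h (x i) (y' i) * \prod_(j < n) PXY (x j) (y' j)
   = (\sum_y0 h (x i) y0 * PXY (x i) y0) * \prod_(j | j != i) \sum_y PXY (x j) y.
  rewrite -(@sum_ffun_single _ _ _ i (fun y0 => h (x i) y0 * PXY (x i) y0) (fun j y => PXY (x j) y)).
  by apply: eq_bigr => y' _; rewrite (bigD1 i) //= mulrA.
under eq_bigr => x _ do rewrite E2.
rewrite (@sum_ffun_single _ _ _ i (fun x0 => \sum_y0 h x0 y0 * PXY x0 y0) (fun j x0 => \sum_y PXY x0 y)).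
rewrite [X in _ * X = _]big1 ?mulr1; last by move=> j _; exact: H1.
apply: eq_bigr => x0 _; rewrite exchange_big; apply: eq_bigr => y0 _.
by rewrite /h mulr_suml.
Qed.

Lemma sum_ind (R : nzRingType) (T : finType) (Pr : pred T) (y0 : T) :
  \sum_(y | Pr y) (y == y0)%:R = (Pr y0)%:R :> R.
Proof.
rewrite big_mkcond (bigD1 y0) //= eqxx big1 ?addr0; first by case: (Pr y0).
by move=> y /negbTE ->; case: (Pr y).
Qed.

Lemma prod_ind (R : comNzRingType) (X Y : finType) (n : nat) (y : {ffun 'I_n -> Y})
  (x : {ffun 'I_n -> X}) (f : {ffun X -> Y}) :
  \prod_(j < n) ((y j == f (x j))%:R : R) = (y == [ffun j => f (x j)])%:R.
Proof.
case: (boolP [forall j, y j == f (x j)]) => H.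
  have -> : y = [ffun j => f (x j)] by apply/ffunP => j; rewrite ffunE; apply/eqP; move/forallP: H.
  by rewrite eqxx big1 // => j _; rewrite ffunE eqxx.
have Hne : (y == [ffun j => f (x j)]) = false.
  apply/negbTE; apply: contra H => /eqP ->; apply/forallP => j; by rewrite ffunE.
rewrite Hne; move: H; rewrite negb_forall => /existsP [j Hj].
by rewrite (bigD1 j) //= (negbTE Hj) mul0r.
Qed.

Lemma det_marginal (R : realFieldType) (X Y A : finType) (n : nat)
  (F : {set {ffun X -> Y}}) (T : A -> {ffun X -> Y} -> R) i yi a x :
  marginal (@det_protocol R X Y A n F T) i yi a x = \sum_(f in F) (yi == f (x i))%:R * T a f.
Proof.
rewrite /marginal /det_protocol exchange_big /=; apply: eq_bigr => f _.
rewrite -mulr_suml; congr (_ * _).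
under eq_bigr => y _ do rewrite /Qdet prod_ind.
by rewrite sum_ind ffunE eq_sym.
Qed.

Theorem lemma1 (R : realFieldType) (X Y A : finType) (n : nat)
  (PXY : X -> Y -> R)
  (P : A -> {ffun 'I_n -> X} -> {ffun 'I_n -> Y} -> R) :
  is_joint_dist PXY -> (1 <= n)%N ->
  is_protocol P -> inductive P ->
  exists (F : {set {ffun X -> Y}}) (T : A -> {ffun X -> Y} -> R),
    (forall a f, 0 <= T a f) /\
    (forall a, \sum_(f in F) T a f = 1) /\
    (forall a, exp_risk PXY P a = exp_risk PXY (@det_protocol R X Y A n F T) a).
Proof.
move=> [W0 W1] n1 [P0 P1] Hind.
pose g a i yi x0 := marginal P i yi a [ffun=> x0].
pose m a x0 y := n%:R^-1 * \sum_(i < n) g a i y x0.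
have g0 a i yi x0 : 0 <= g a i yi x0 by apply: sumr_ge0 => y _.
have g1 a i x0 : \sum_y g a i y x0 = 1.
  rewrite -(P1 a [ffun=> x0]) /g /marginal.
  by rewrite [RHS](partition_big (fun y : {ffun 'I_n -> Y} => y i) xpredT).
have nz : n%:R != 0 :> R by rewrite pnatr_eq0 -lt0n.
have m0 a x0 y : 0 <= m a x0 y.
  by apply: mulr_ge0; [rewrite invr_ge0 ler0n | apply: sumr_ge0 => i _].
have m1 a x0 : \sum_y m a x0 y = 1.
  rewrite -mulr_sumr exchange_big /=.
  under eq_bigr => i _ do rewrite g1.
  by rewrite sumr_const card_ord -mulr_natr mul1r mulVf.
exists setT, (fun a f => \prod_x0 m a x0 (f x0)).
split; first by move=> a f; apply: prodr_ge0 => x0 _.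
have setTE (F : {ffun X -> Y} -> R) : \sum_(f in [set: {ffun X -> Y}]) F f = \sum_f F f.
  by apply: eq_bigl => f; rewrite in_setT.
split.
  move=> a; rewrite setTE -(bigA_distr_bigA (fun x0 y => m a x0 y)) /=.
  by apply: big1 => x0 _.
move=> a.
rewrite (@risk_formula R X Y A n PXY P a (g a) W1); last first.
  by move=> i yi x; rewrite /g (Hind i yi a x [ffun=> x i]) // ffunE.
rewrite (@risk_formula R X Y A n PXY _ a (fun i yi x0 => m a x0 yi) W1); last first.
  move=> i yi x; rewrite det_marginal setTE.
  under eq_bigr => f _ do rewrite (bigD1 (x i)) //= mulrA.
  rewrite (@sum_ffun_single _ _ _ (x i) (fun y => (yi == y)%:R * m a (x i) y) (fun j y => m a j y)).
  rewrite [X in _ * X]big1 ?mulr1; last by move=> j _; exact: m1.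
  rewrite (bigD1 yi) //= eqxx mul1r big1 ?addr0 //.
  by move=> y; rewrite eq_sym => /negbTE ->; rewrite mul0r.
rewrite [in RHS]sumr_const card_ord [in RHS]mulrnAr -[in RHS]mulrnAl -[in RHS]mulr_natr [in RHS]mulVf // [in RHS]mul1r.
rewrite exchange_big /=.
under eq_bigr => x0 _ do rewrite exchange_big /=.
under eq_bigr => x0 _ do under eq_bigr => yi _ do rewrite exchange_big /=.
rewrite mulr_sumr; apply: eq_bigr => x0 _.
rewrite mulr_sumr; apply: eq_bigr => yi _.
rewrite mulr_sumr; apply: eq_bigr => y0 _.
rewrite /m /= [in RHS]mulrCA -[in RHS]mulrA [in RHS]mulr_sumr [in RHS]mulr_suml; congr (_ * _).
Qed.
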